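(* In the Byblos protocol described in the context, at all times, if $P=\mathit{pending}[t]$ is a non-empty pending set calculated by a correct server, then $\bigcup_{t'<t}\mathit{confirmed}[t']\subseteq P$, where $\mathit{confirmed}[t']$ is the confirmed set of any correct server.
   Context: Byblos protocol. There are $n=4f+1$ servers, at most $f$ of which are Byzantine; the rest are correct. Clients are not Byzantine (they may crash). Messages between correct parties are eventually delivered, channels are FIFO, senders are authenticated, and client messages are signed and unforgeable. Each correct server keeps an integer $\mathit{clock}$ (initially $0$), sets $\mathit{proposed}[s]$ of pairs $(T,k)$ for each server $s$, maps $\mathit{confirmed}[t]$ and $\mathit{pending}[t]$ from timestamps to sets of transactions (initially empty), and sets $\mathit{ConfirmWitness}[T]$ of servers. Client with transaction $T$: broadcasts $\mathrm{Propose}(T)$; waits for $\mathrm{ProposeAck}(T,\cdot)$ from at least $n-f$ servers; letting $\mathit{timestamp}[s]$ be the value from server $s$ ($0$ if none), sets $\hat t$ to $1$ plus the $(f+1)$-st largest value; broadcasts $\mathrm{Confirm}(T,\hat t)$. Correct server: on $\mathrm{Propose}(T)$ from a client, adds $(T,\mathit{clock})$ to $\mathit{proposed}[\mathit{self}]$, sends $\mathrm{Proposed}(T,\mathit{clock})$ to all servers and $\mathrm{ProposeAck}(T,\mathit{clock})$ to the client; on $\mathrm{Proposed}(T,k)$ from server $s$, adds $(T,k)$ to $\mathit{proposed}[s]$; on $\mathrm{Confirm}(T,\hat t)$ from a client or server $s$: sets $\mathit{clock}:=\max(\mathit{clock},\hat t)$, adds $T$ to $\mathit{confirmed}[\hat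 t]$, forwards $\mathrm{Confirm}(T,\hat t)$ to all servers if not previously sent, adds $s$ to $\mathit{ConfirmWitness}[T]$, and if $\mathit{pending}[\hat t]=\emptyset$ and $|\mathit{ConfirmWitness}[T]|=n-f$, sets $\mathit{pending}[\hat t]$ to the set of all $T'$ such that $(T',k)\in\mathit{proposed}[s']$ for some $s'\in\mathit{ConfirmWitness}[T]$ and some $k\le\hat t$. *)

(* Defs.v *)
From mathcomp Require Import all_boot.
Set Implicit Arguments. Unset Strict Implicit. Unset Printing Implicit Defensive.

Definition nsrv (f : nat) : nat := (4 * f).+1.

Inductive msg (Tx : Type) :=
| MPropose of Tx            (* client -> server : Propose(T)        *)
| MProposed of Tx & nat     (* server -> server : Proposed(T,k)     *)
| MProposeAck of Tx & nat   (* server -> client : ProposeAck(T,k)   *)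
| MConfirm of Tx & nat.     (* client/server -> server : Confirm(T,t) *)
Arguments MPropose {Tx}. Arguments MProposed {Tx}.
Arguments MProposeAck {Tx}. Arguments MConfirm {Tx}.

Inductive phase := Idle | Waiting | Done.
Definition is_waiting (p : phase) : bool := if p is Waiting then true else false.

Definition upd (A : eqType) (B : Type) (g : A -> B) (a : A) (b : B) : A -> B :=
  fun x => if x == a then b else g x.

Section Byblos.
Variable f : nat.
Variable Tx : eqType.          (* transactions; each transaction is issued by its own client *)
Variable Byz : {set 'I_(nsrv f)}.
Local Notation N := (nsrv f).

(* network nodes: servers (inl) and clients (inr), a client being identified
   with the transaction it submits *)
Definition node := ('I_N + Tx)%type.
Definition is_srv (x : node) : bool := if x is inl _ then true else false.

Definition chans := node -> node -> seq (msg Tx).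

Definition push (c : chans) (x y : node) (m : msg Tx) : chans :=
  fun a b => if (a == x) && (b == y) then rcons (c a b) m else c a b.
Definition bcast (c : chans) (x : node) (m : msg Tx) : chans :=
  fun a b => if (a == x) && is_srv b then rcons (c a b) m else c a b.
Definition setch (c : chans) (x y : node) (l : seq (msg Tx)) : chans :=
  fun a b => if (a == x) && (b == y) then l else c a b.

(* local state of a correct server; sets are represented by sequences
   (membership = set membership) *)
Record sstate := SState {
  clock : nat;
  proposed : 'I_N -> seq (Tx * nat);
  confirmed : nat -> seq Tx;
  pending : nat -> seq Tx;
  cwit : Tx -> {set 'I_N};
  fwd : seq (Tx * nat)            (* Confirm messages already forwarded *)
}.

Record cstate := CState {
  cph : phase;
  acks : 'I_N -> option nat       (* ProposeAck value received from each server *)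
}.

Record gstate := GState {
  srv : 'I_N -> sstate;
  cli : Tx -> cstate;
  net : chans;
  signed : seq (Tx * nat)         (* Confirm(T,t) messages signed by clients *)
}.

Definition pendset (pr : 'I_N -> seq (Tx * nat)) (W : {set 'I_N}) (t : nat) : seq Tx :=
  flatten [seq [seq p.1 | p <- pr s' & p.2 <= t] | s' <- enum W].

Definition handle (s : 'I_N) (x : node) (m : msg Tx) (ss : sstate) (c : chans)
  : sstate * chans :=
  match m, x with
  | MPropose T, inr _ =>
      let k := clock ss in
      (SState k (upd (proposed ss) s (rcons (proposed ss s) (T, k)))
              (confirmed ss) (pending ss) (cwit ss) (fwd ss),
       push (bcast c (inl s) (MProposed T k)) (inl s) x (MProposeAck T k))
  | MProposed T k, inl s' =>
      (SState (clock ss) (upd (proposed ss) s' (rcons (proposed ss s') (T, k)))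
              (confirmed ss) (pending ss) (cwit ss) (fwd ss), c)
  | MConfirm T t, _ =>
      let clk := maxn (clock ss) t in
      let conf := upd (confirmed ss) t (rcons (confirmed ss t) T) in
      let already := (T, t) \in fwd ss in
      let c' := if already then c else bcast c (inl s) (MConfirm T t) in
      let fwd' := if already then fwd ss else (T, t) :: fwd ss in
      let W := match x with inl s' => s' |: cwit ss T | inr _ => cwit ss T end in
      let wit' := upd (cwit ss) T W in
      let pend' := if nilp (pending ss t) && (#|W| == N - f)
                   then upd (pending ss) t (pendset (proposed ss) W t)
                   else pending ss in
      (SState clk (proposed ss) conf pend' wit' fwd', c')
  | _, _ => (ss, c)
  end.

Definition nacks (ac : 'I_N -> option nat) : nat := #|[pred s : 'I_N | isSome (ac s)]|.
Definition tsv (ac : 'I_N -> option nat) (s : 'I_N) : nat :=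
  if ac s is Some k then k else 0.
Definition that (ac : 'I_N -> option nat) : nat :=
  (nth 0 (sort geq [seq tsv ac s | s <- enum 'I_N]) f).+1.

Definition init_sstate : sstate :=
  SState 0 (fun _ => [::]) (fun _ => [::]) (fun _ => [::]) (fun _ => set0) [::].
Definition init : gstate :=
  GState (fun _ => init_sstate) (fun _ => CState Idle (fun _ => None))
         (fun _ _ => [::]) [::].

Inductive step : gstate -> gstate -> Prop :=
| StClientPropose st T :
    cph (cli st T) = Idle ->
    step st (GState (srv st) (upd (cli st) T (CState Waiting (acks (cli st T))))
                    (bcast (net st) (inr T) (MPropose T)) (signed st))
| StClientRecv st T s m rest :
    net st (inl s) (inr T) = m :: rest ->
    let cs := cli st T in
    let cs' := match m with
               | MProposeAck T' k =>
                   if (T' == T) && is_waiting (cph cs) && (acks cs s == None)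
                   then CState (cph cs) (upd (acks cs) s (Some k)) else cs
               | _ => cs end in
    step st (GState (srv st) (upd (cli st) T cs')
                    (setch (net st) (inl s) (inr T) rest) (signed st))
| StClientConfirm st T :
    cph (cli st T) = Waiting ->
    N - f <= nacks (acks (cli st T)) ->
    let th := that (acks (cli st T)) in
    step st (GState (srv st) (upd (cli st) T (CState Done (acks (cli st T))))
                    (bcast (net st) (inr T) (MConfirm T th)) ((T, th) :: signed st))
| StServerRecv st s x m rest :
    s \notin Byz ->
    net st x (inl s) = m :: rest ->
    let r := handle s x m (srv st s) (setch (net st) x (inl s) rest) in
    step st (GState (upd (srv st) s r.1) (cli st) r.2 (signed st))
| StByzSend st s y m :
    s \in Byz ->
    (* client messages are signed: Byzantine servers cannot forge Confirm *)
    (forall T t, m = MConfirm T t -> (T, t) \in signed st) ->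
    step st (GState (srv st) (cli st) (push (net st) (inl s) y m) (signed st)).

Inductive reachable : gstate -> Prop :=
| ReachInit : reachable init
| ReachStep st st' : reachable st -> step st st' -> reachable st'.

End Byblos.

(* Main.v *)
Require Import Defs.
From mathcomp Require Import all_boot.
Set Implicit Arguments. Unset Strict Implicit. Unset Printing Implicit Defensive.

Lemma count_gt_nth (s : seq nat) n :
  sorted geq s -> count (fun x => nth 0 s n < x) s <= n.
Proof.
move=> Hs.
case: (leqP (size s) n) => Hsz.
  by apply: leq_trans (count_size _ _) Hsz.
set v := nth 0 s n.
have geq_tr : transitive geq by move=> a b c /= h1 h2; exact: leq_trans h2 h1.
have Hd0 : count (fun x => v < x) (drop n s) = 0.
  have Hd : sorted geq (drop n s) := subseq_sorted geq_tr (drop_subseq s n) Hs.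
  rewrite (drop_nth 0 Hsz) /= in Hd *.
  have /allP Ha := order_path_min geq_tr Hd.
  rewrite -/v ltnn add0n; apply/eqP; rewrite -leqn0 leqNgt -has_count; apply/hasPn => y Hy.
  by have := Ha y Hy; rewrite /= -leqNgt.
rewrite -(cat_take_drop n s) count_cat.
rewrite Hd0 addn0; apply: leq_trans (count_size _ _) _.
by rewrite size_take Hsz.
Qed.

Lemma count_tsv f (ac : 'I_(nsrv f) -> option nat) :
  #|[set s | that ac <= tsv ac s]| <= f.
Proof.
rewrite /that.
set L := [seq tsv ac s | s <- enum 'I_(nsrv f)].
set v := nth 0 (sort geq L) f.
have H1 := count_gt_nth f (sort_sorted (fun a b => leq_total b a) L).
rewrite -/v in H1.
have : count (fun x => v < x) L <= f.
  by move: H1; rewrite (permP (permEl (perm_sort geq L))).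
rewrite /L count_map cardE /enum_mem size_filter count_filter.
move=> H; apply: leq_trans H; apply: eq_leq; apply: eq_count => x.
by rewrite !inE /= andbT.
Qed.

From mathcomp Require Import zify.

Lemma exists_good f (Byz W : {set 'I_(nsrv f)}) (ac : 'I_(nsrv f) -> option nat) :
  #|Byz| <= f -> nsrv f - f <= nacks ac -> #|W| = nsrv f - f ->
  exists s k, [/\ s \in W, s \notin Byz, ac s = Some k & k < that ac].
Proof.
move=> HB Hn HW.
set S := [set s | isSome (ac s)].
set H := [set s | that ac <= tsv ac s].
have HH := count_tsv ac. rewrite -/H in HH.
have HS : #|S| = nacks ac by rewrite /nacks cardsE.
set L := S :\: H.
have HL : #|L| >= #|S| - #|H|.
  rewrite /L cardsD; have := subset_leq_card (subsetIr S H); lia.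
have HU : #|W :|: L| <= nsrv f by have := max_card (W :|: L); rewrite card_ord.
have HI := cardsI W L.
set X := (W :&: L) :\: Byz.
have HX : 0 < #|X|.
  rewrite /X cardsD; have := subset_leq_card (subsetIr (W :&: L) Byz).
  rewrite /nsrv in HU HW Hn. move=> Hb. set a := #|W :&: L| in HI Hb *. set b := #|W :&: L :&: Byz| in Hb *. set c := #|L| in HI HL. set d := #|W :|: L| in HI HU. set e := #|S| in HS HL. set g := #|H| in HH HL. set w := #|W| in HW HI. lia.
move: HX; rewrite card_gt0 => /set0Pn [s].
rewrite /X /L !inE => /and3P [HsB HsW /andP [HsH HsS]].
move: HsS HsH; rewrite /tsv -ltnNge.
case E: (ac s) => [k|] // _ Hk.
by exists s, k.
Qed.
From Stdlib Require List.
Section Inv.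
Variable f : nat.
Variable Tx : eqType.
Variable Byz : {set 'I_(nsrv f)}.
Local Notation N := (nsrv f).
Local Notation gst := (gstate f Tx).

Record Inv (st : gst) : Prop := {
 iS : forall x y T t, List.In (MConfirm T t) (net st x y) -> (T,t) \in signed st;
 iCF : forall s T t, s \notin Byz -> T \in confirmed (srv st s) t -> (T,t) \in signed st;
 iC : forall T t, (T,t) \in signed st ->
        [/\ cph (cli st T) = Done, t = that (acks (cli st T)) & N - f <= nacks (acks (cli st T))];
 iA : forall s T k, s \notin Byz -> acks (cli st T) s = Some k -> (T,k) \in proposed (srv st s) s;
 iA2 : forall s y T k, s \notin Byz -> List.In (MProposeAck T k) (net st (inl s) y) ->
        (T,k) \in proposed (srv st s) s;
 iA3 : forall s y T k, s \notin Byz -> List.In (MProposed T k) (net st (inl s) y) ->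
        (T,k) \in proposed (srv st s) s;
 iL : forall s s1 T k, s \notin Byz -> s1 \notin Byz -> (T,k) \in proposed (srv st s) s ->
        (T,k) \in proposed (srv st s1) s \/ List.In (MProposed T k) (net st (inl s) (inl s1));
 iK : forall s s1 c1 c2 T0 t0 T k, s \notin Byz -> s1 \notin Byz ->
        net st (inl s) (inl s1) = c1 ++ MConfirm T0 t0 :: c2 ->
        (T,k) \in proposed (srv st s) s -> k < t0 ->
        (T,k) \in proposed (srv st s1) s \/ List.In (MProposed T k) c1;
 iK2 : forall s y T0 t0, s \notin Byz -> List.In (MConfirm T0 t0) (net st (inl s) y) ->
        t0 <= clock (srv st s);
 iW : forall s1 s T0, s1 \notin Byz -> s \in cwit (srv st s1) T0 -> exists t0, (T0,t0) \in signed st;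
 iJ : forall s s1 T0 t0 T k, s \notin Byz -> s1 \notin Byz -> s \in cwit (srv st s1) T0 ->
        (T0,t0) \in signed st -> (T,k) \in proposed (srv st s) s -> k < t0 ->
        (T,k) \in proposed (srv st s1) s;
 iM : forall s s1 T0 t0, s \notin Byz -> s1 \notin Byz -> s \in cwit (srv st s1) T0 ->
        (T0,t0) \in signed st -> t0 <= clock (srv st s);
 iP : forall s1 t, s1 \notin Byz -> pending (srv st s1) t != [::] ->
        exists W : {set 'I_N}, #|W| = N - f /\
          forall s, s \in W -> s \notin Byz -> t <= clock (srv st s) /\
            forall T k, (T,k) \in proposed (srv st s) s -> k < t -> T \in pending (srv st s1) t
}.

Lemma In_rcons (A : Type) (l : seq A) a m : List.In m (rcons l a) <-> List.In m l \/ m = a.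
Proof. rewrite -cats1 List.in_app_iff /=; intuition. Qed.

Lemma rcons_decomp (A : Type) (l c1 c2 : seq A) m0 m :
  rcons l m0 = c1 ++ m :: c2 ->
  (exists c2', l = c1 ++ m :: c2') \/ (l = c1 /\ m = m0).
Proof.
case/lastP: c2 => [|c2 z].
  rewrite cats1 => /rcons_inj [-> ->]; by right.
rewrite -rcons_cons -rcons_cat => /rcons_inj [-> _]; left; by eexists.
Qed.

Lemma Inv_init : Inv (@init f Tx).
Proof. split => //=. by move=> s1 s T0 _; rewrite in_set0. Qed.

Lemma Inv_quiet (st st' : gst) :
  Inv st ->
  (forall s, srv st' s = srv st s) ->
  (forall s y m, s \notin Byz -> List.In m (net st' (inl s) y) -> List.In m (net st (inl s) y)) ->
  (forall s s1, s \notin Byz -> s1 \notin Byz ->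
      net st (inl s) (inl s1) = net st' (inl s) (inl s1) \/
      exists m0, net st (inl s) (inl s1) = m0 :: net st' (inl s) (inl s1) /\ forall T k, m0 <> MProposed T k) ->
  {subset signed st <= signed st'} ->
  (forall T0 t0, (T0,t0) \in signed st' -> (T0,t0) \in signed st \/
       forall s1 s, s1 \notin Byz -> s \notin cwit (srv st s1) T0) ->
  (forall x y T t, List.In (MConfirm T t) (net st' x y) -> (T,t) \in signed st') ->
  (forall T t, (T,t) \in signed st' ->
        [/\ cph (cli st' T) = Done, t = that (acks (cli st' T)) & N - f <= nacks (acks (cli st' T))]) ->
  (forall s T k, s \notin Byz -> acks (cli st' T) s = Some k -> (T,k) \in proposed (srv st s) s) ->
  Inv st'.
Proof.
move=> I Hsrv Hsub Hss Hsig Hsig2 HS HC HA.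
split => //.
- by move=> s T t Hs; rewrite Hsrv => /(iCF I Hs) /Hsig.
- by move=> s T k Hs; rewrite Hsrv; apply: HA.
- by move=> s y T k Hs; rewrite Hsrv => /(Hsub _ _ _ Hs) /(iA2 I Hs).
- by move=> s y T k Hs; rewrite Hsrv => /(Hsub _ _ _ Hs) /(iA3 I Hs).
- move=> s s1 T k Hs Hs1; rewrite !Hsrv => /(iL I Hs Hs1) [->|]; first by left.
  case: (Hss _ _ Hs Hs1) => [->|[m0 [-> Hm0]]]; first by right.
  case=> [E|]; last by right.
  by case: (Hm0 T k).
- move=> s s1 c1 c2 T0 t0 T k Hs Hs1; rewrite !Hsrv => Hc Hp Hk.
  case: (Hss _ _ Hs Hs1) => [E|[m0 [E Hm0]]].
    by apply: (iK I Hs Hs1 _ Hp Hk); rewrite E Hc.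
  have := iK I Hs Hs1 (c1 := m0 :: c1) (c2 := c2) (T0:=T0) (t0:=t0) _ Hp Hk.
  rewrite E Hc => /(_ erefl) [->|]; first by left.
  case=> [E2|]; last by right.
  by case: (Hm0 T k).
- by move=> s y T0 t0 Hs; rewrite Hsrv => /(Hsub _ _ _ Hs) /(iK2 I Hs).
- move=> s1 s T0 Hs1; rewrite Hsrv => /(iW I Hs1) [t0 H].
  by exists t0; apply: Hsig.
- move=> s s1 T0 t0 T k Hs Hs1; rewrite !Hsrv => Hw /Hsig2 [Hg|Hn].
    exact: (iJ I Hs Hs1 Hw Hg).
  by rewrite (negbTE (Hn _ _ Hs1)) in Hw.
- move=> s s1 T0 t0 Hs Hs1; rewrite !Hsrv => Hw /Hsig2 [Hg|Hn].
    exact: (iM I Hs Hs1 Hw Hg).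
  by rewrite (negbTE (Hn _ _ Hs1)) in Hw.
- move=> s1 t Hs1; rewrite Hsrv => /(iP I Hs1) [W [HW HP]].
  by exists W; split => // s Hw Hs; rewrite Hsrv; apply: HP.
Qed.

Lemma inl_eq (a b : 'I_N) : ((inl a : node f Tx) == inl b) = (a == b).
Proof. by apply/eqP/eqP => [[]|->]. Qed.

Lemma In_setch (c : chans f Tx) x y l a b m0 m :
  c x y = m0 :: l -> List.In m (setch c x y l a b) -> List.In m (c a b).
Proof.
rewrite /setch => E; case: ifP => // /andP [/eqP -> /eqP ->]; rewrite E => H; by right.
Qed.

Lemma In_bcast (c : chans f Tx) x m0 a b m :
  List.In m (bcast c x m0 a b) -> List.In m (c a b) \/ (m = m0 /\ a = x).
Proof.
rewrite /bcast; case: ifP => [/andP [/eqP -> _]|_]; last by left.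
by case/In_rcons; [left|right].
Qed.

Lemma In_push (c : chans f Tx) x y m0 a b m :
  List.In m (push c x y m0 a b) -> List.In m (c a b) \/ (m = m0 /\ a = x /\ b = y).
Proof.
rewrite /push; case: ifP => [/andP [/eqP -> /eqP ->]|_]; last by left.
by case/In_rcons; [left|right].
Qed.

Lemma Inv_client_propose (st : gst) T :
  Inv st -> cph (cli st T) = Idle ->
  Inv (GState (srv st) (upd (cli st) T (CState Waiting (acks (cli st T))))
                    (bcast (net st) (inr T) (MPropose T)) (signed st)).
Proof.
move=> I Hid; apply: (Inv_quiet I) => /=.
- by [].
- by move=> s y m _; rewrite /bcast /=.
- by move=> s s1 _ _; left; rewrite /bcast /=.
- by [].
- by move=> T0 t0 ->; left.
- by move=> x y T0 t0 /In_bcast [/(iS I)|[]].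
- move=> T0 t0 /(iC I) [Hd Ht Hn]; rewrite /upd; case: eqP => [E|//].
  by subst T0; rewrite Hd in Hid.
- move=> s T0 k Hs; rewrite /upd; case: eqP => [->|_] /=; exact: iA.
Qed.

Lemma Inv_byz (st : gst) s y m :
  Inv st -> s \in Byz ->
  (forall T t, m = MConfirm T t -> (T, t) \in signed st) ->
  Inv (GState (srv st) (cli st) (push (net st) (inl s) y m) (signed st)).
Proof.
move=> I HB Hm.
have Hne : forall s0, s0 \notin Byz -> (s0 == s) = false.
  by move=> s0 Hs0; apply/eqP => E; rewrite E HB in Hs0.
apply: (Inv_quiet I) => /=.
- by [].
- by move=> s0 y0 m0 Hs0; rewrite /push inl_eq Hne.
- by move=> s0 s1 Hs0 _; left; rewrite /push inl_eq Hne.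
- by [].
- by move=> T0 t0 ->; left.
- move=> x y0 T0 t0 /In_push [/(iS I) //|[E _]].
  exact: Hm.
- exact: (iC I).
- exact: (iA I).
Qed.

Lemma Inv_client_confirm (st : gst) T :
  Inv st -> cph (cli st T) = Waiting -> N - f <= nacks (acks (cli st T)) ->
  Inv (GState (srv st) (upd (cli st) T (CState Done (acks (cli st T))))
                    (bcast (net st) (inr T) (MConfirm T (that (acks (cli st T)))))
                    ((T, that (acks (cli st T))) :: signed st)).
Proof.
move=> I Hw Hn; apply: (Inv_quiet I) => /=.
- by [].
- by move=> s y m _; rewrite /bcast /=.
- by move=> s s1 _ _; left; rewrite /bcast /=.
- by move=> p Hp; rewrite inE Hp orbT.
- move=> T0 t0; rewrite inE => /orP [/eqP [-> _]|->]; last by left.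
  right => s1 s Hs1; apply/negP => /(iW I Hs1) [t1 /(iC I) [Hd _ _]].
  by rewrite Hd in Hw.
- move=> x y T0 t0 /In_bcast [/(iS I) H|[[-> ->] _]]; first by rewrite inE H orbT.
  by rewrite inE eqxx.
- move=> T0 t0; rewrite inE /upd => /orP [/eqP [-> ->]|Hs].
    by rewrite eqxx.
  have [Hd Ht Hn'] := iC I Hs.
  case: eqP => [E|//]; subst T0; by rewrite Hd in Hw.
- move=> s T0 k Hs; rewrite /upd; case: eqP => [->|_] /=; exact: iA.
Qed.

Lemma Inv_client_recv (st : gst) T s m rest :
  Inv st -> net st (inl s) (inr T) = m :: rest ->
    let cs := cli st T in
    let cs' := match m with
               | MProposeAck T' k =>
                   if (T' == T) && is_waiting (cph cs) && (acks cs s == None)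
                   then CState (cph cs) (upd (acks cs) s (Some k)) else cs
               | _ => cs end in
    Inv (GState (srv st) (upd (cli st) T cs')
                    (setch (net st) (inl s) (inr T) rest) (signed st)).
Proof.
move=> I Hnet cs cs'; apply: (Inv_quiet I) => /=.
- by [].
- by move=> s0 y m0 _; apply: In_setch Hnet.
- by move=> s0 s1 _ _; left; rewrite /setch /= andbF.
- by [].
- by move=> T0 t0 ->; left.
- by move=> x y T0 t0 /(In_setch Hnet) /(iS I).
- move=> T0 t0 /(iC I) [Hd Ht Hn]; rewrite /upd; case: eqP => [E|//]; subst T0.
  suff -> : cs' = cs by [].
  rewrite /cs' /cs; case: m Hnet {cs'} => // T1 k _.
  by rewrite Hd /= andbF.
- move=> s0 T0 k Hs0; rewrite /upd; case: eqP => [E|_]; last exact: iA.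
  subst T0; rewrite /cs' /cs; case: m Hnet {cs'} => [?|??|T1 k1|??] Hnet; try exact: iA.
  case: ifP => [/andP [/andP [/eqP E _] _]|_]; last exact: iA.
  subst T1 => /=; rewrite /upd; case: (s0 =P s) => [E|_]; last exact: iA.
  subst s0 => -[<-]; apply: (iA2 I (y := inr T) Hs0).
  by rewrite Hnet; left.
Qed.

Lemma pendsetP (pr : 'I_N -> seq (Tx * nat)) (W : {set 'I_N}) t s T k :
  s \in W -> (T,k) \in pr s -> k <= t -> T \in pendset pr W t.
Proof.
move=> Hs Hp Hk; apply/flattenP.
exists [seq p.1 | p <- pr s & p.2 <= t]; first by apply/mapP; exists s; rewrite ?mem_enum.
by apply/mapP; exists (T,k); rewrite // mem_filter Hp andbT.
Qed.

Lemma Inv_confirm (st : gst) r x T t rest :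
  Inv st -> r \notin Byz -> net st x (inl r) = MConfirm T t :: rest ->
  let ss := srv st r in
  let c := setch (net st) x (inl r) rest in
  let clk := maxn (clock ss) t in
  let conf := upd (confirmed ss) t (rcons (confirmed ss t) T) in
  let already := (T, t) \in fwd ss in
  let c' := if already then c else bcast c (inl r) (MConfirm T t) in
  let fwd' := if already then fwd ss else (T, t) :: fwd ss in
  let W := match x with inl s' => s' |: cwit ss T | inr _ => cwit ss T end in
  let wit' := upd (cwit ss) T W in
  let pend' := if nilp (pending ss t) && (#|W| == N - f)
               then upd (pending ss) t (pendset (proposed ss) W t)
               else pending ss in
  Inv (GState (upd (srv st) r (SState clk (proposed ss) conf pend' wit' fwd')) (cli st) c' (signed st)).
Proof.
move=> I Hr Hnet ss c clk conf already c' fwd' W wit' pend'.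
clearbody already.
set st' := GState _ _ _ _.
have Ht : (T,t) \in signed st by apply: (iS I (x:=x) (y:=inl r)); rewrite Hnet; left.
have Fprop : forall s s0, proposed (srv st' s) s0 = proposed (srv st s) s0.
  by move=> s s0; rewrite /st' /= /upd; case: eqP => // ->.
have Fclk : forall s, clock (srv st s) <= clock (srv st' s).
  by move=> s; rewrite /st' /= /upd; case: eqP => // ->; rewrite /clk leq_maxl.
have Fclkr : t <= clock (srv st' r).
  by rewrite /st' /= /upd eqxx /clk leq_maxr.
have Fconf : forall s T' t', T' \in confirmed (srv st' s) t' ->
    T' \in confirmed (srv st s) t' \/ (T' = T /\ t' = t).
  move=> s T' t'; rewrite /st' /= /upd; case: eqP => [->|_]; last by left.
  rewrite /conf /upd /=; case: ifP => [/eqP ->|_]; last by left.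
  rewrite -cats1 mem_cat inE => /orP [H|/eqP ->]; by [left|right].
have Fcwit : forall s1 s0 T0, s0 \in cwit (srv st' s1) T0 ->
    s0 \in cwit (srv st s1) T0 \/ (s1 = r /\ T0 = T /\ x = inl s0).
  move=> s1 s0 T0; rewrite /st' /= /upd; case: eqP => [->|_]; last by left.
  rewrite /wit' /upd /=; case: ifP => [/eqP ->|_]; last by left.
  rewrite /W; case: x Hnet {W wit' pend' c c' st' Fprop Fclk Fclkr Fconf} => [s'|X] Hnet; last by left.
  rewrite !inE => /orP [/eqP ->|H]; by [right|left].
have Fpend : forall s1 t', pending (srv st' s1) t' =
    if (s1 == r) && (t' == t) && (nilp (pending ss t) && (#|W| == N - f))
    then pendset (proposed ss) W t else pending (srv st s1) t'.
  move=> s1 t'; rewrite /st' /= /upd; case: (s1 =P r) => [->|_] //=.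
  rewrite /pend'; case: (t' =P t) => [->|/eqP Hne] /=.
    by case: ifP; rewrite /upd ?eqxx.
  by case: ifP; rewrite /upd ?(negbTE Hne).
have Fnet_in : forall a b m', List.In m' (net st' a b) ->
    List.In m' (net st a b) \/ (m' = MConfirm T t /\ a = inl r).
  move=> a b m'; rewrite /st' /= /c'; case: ifP => _.
    by move/(In_setch Hnet); left.
  by case/In_bcast => [/(In_setch Hnet)|]; [left|right].
have Fnet_ss : forall s s1, s != s1 ->
   (net st' (inl s) (inl s1) = net st (inl s) (inl s1)) \/
   (x = inl s /\ s1 = r /\ net st (inl s) (inl s1) = MConfirm T t :: net st' (inl s) (inl s1)) \/
   (s = r /\ net st' (inl s) (inl s1) = rcons (net st (inl s) (inl s1)) (MConfirm T t)).
  move=> s s1 Hne; rewrite /st' /= /c'.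
  have Hc : c (inl s) (inl s1) = net st (inl s) (inl s1) \/
            (x = inl s /\ s1 = r /\ net st (inl s) (inl s1) = MConfirm T t :: c (inl s) (inl s1)).
    rewrite /c /setch; case: ifP => [/andP [/eqP Ex /eqP Es1]|_]; last by left.
    right; case: Es1 => ->; subst x; by rewrite Hnet.
  case: ifP => _.
    by case: Hc => [->|]; [left|right; left].
  rewrite /bcast inl_eq /=; case: (s =P r) => [Esr|_] /=; last by case: Hc => [->|]; [left|right; left].
  subst s; case: Hc => [->|[_ [Es1 _]]]; first by right; right.
  by rewrite Es1 eqxx in Hne.
split.
- move=> a b T0 t0 /Fnet_in [/(iS I) //|[[-> ->] _]] //.
- move=> s T0 t0 Hs /Fconf [/(iCF I Hs) //|[-> ->]] //.
- exact: (iC I).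
- by move=> s T0 k Hs; rewrite Fprop; apply: (iA I).
- move=> s y T0 k Hs; rewrite Fprop => /Fnet_in [/(iA2 I Hs) //|[]] //.
- move=> s y T0 k Hs; rewrite Fprop => /Fnet_in [/(iA3 I Hs) //|[]] //.
- move=> s s1 T0 k Hs Hs1; rewrite !Fprop.
  case: (s =P s1) => [<- ->|/eqP Hne]; first by left.
  move=> /(iL I Hs Hs1) [->|Hin]; first by left.
  case: (Fnet_ss _ _ Hne) => [->|[[_ [_ E]]|[_ ->]]]; first by right.
    by move: Hin; rewrite E => -[//|H]; right.
  by right; apply/In_rcons; left.
- move=> s s1 c1 c2 T0 t0 T' k Hs Hs1; rewrite !Fprop.
  case: (s =P s1) => [<- _ ->|/eqP Hne]; first by left.
  case: (Fnet_ss _ _ Hne) => [->|[[_ [_ E]]|[_ ->]]].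
  + exact: (iK I Hs Hs1).
  + move=> Hc Hp Hk.
    have := iK I (c1 := MConfirm T t :: c1) (c2 := c2) (T0 := T0) (t0 := t0) Hs Hs1 _ Hp Hk.
    by rewrite E Hc => /(_ erefl) [->|[//|H]]; [left|right].
  + move=> Hc0; case: (rcons_decomp Hc0) => [[c2' Hc]|[Hc [_ ->]]] Hp Hk.
      exact: (iK I Hs Hs1 Hc).
    by rewrite -Hc; apply: (iL I Hs Hs1).
- move=> s y T0 t0 Hs /Fnet_in [/(iK2 I Hs) H|[[_ ->] [->]]] //.
  exact: leq_trans H (Fclk s).
- move=> s1 s0 T0 Hs1 /Fcwit [/(iW I Hs1) //|[_ [-> _]]].
  by exists t.
- move=> s s1 T0 t0 T' k Hs Hs1; rewrite !Fprop => /Fcwit [Hw|[-> [-> Ex]]].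
    exact: (iJ I Hs Hs1 Hw).
  move=> Hs2 Hp Hk.
  have Et : t0 = t by have [_ -> _] := iC I Hs2; have [_ -> _] := iC I Ht.
  subst t0.
  have := iK I (c1 := [::]) (c2 := rest) (T0 := T) (t0 := t) Hs Hr _ Hp Hk.
  by rewrite -Ex Hnet => /(_ erefl) [|[]].
- move=> s s1 T0 t0 Hs Hs1 /Fcwit [Hw Hs2|[_ [-> Ex]] Hs2].
    exact: leq_trans (iM I Hs Hs1 Hw Hs2) (Fclk s).
  have Et : t0 = t by have [_ -> _] := iC I Hs2; have [_ -> _] := iC I Ht.
  subst t0; apply: leq_trans (Fclk s).
  by apply: (iK2 I (y := inl r) Hs); rewrite -Ex Hnet; left.
- move=> s1 t' Hs1; rewrite Fpend.
  case: ifP => [/andP [/andP [/eqP Es1 /eqP Et'] /andP [_ /eqP HW]] _|_].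
    subst s1 t'; exists W; split => // s Hw Hs; rewrite Fprop.
    have HwC : s \in cwit ss T \/ x = inl s.
      move: Hw; rewrite /W; case: (x) => [s'|X]; last by left.
      by rewrite !inE => /orP [/eqP ->|]; [right|left].
    split.
      case: HwC => [Hw'|Ex]; first exact: leq_trans (iM I Hs Hr Hw' Ht) (Fclk s).
      apply: leq_trans (Fclk s).
      by apply: (iK2 I (y := inl r) Hs); rewrite -Ex Hnet; left.
    move=> T' k Hp Hk; apply: (pendsetP Hw _ (ltnW Hk)).
    case: HwC => [Hw'|Ex]; first exact: (iJ I Hs Hr Hw' Ht Hp Hk).
    have := iK I (c1 := [::]) (c2 := rest) (T0 := T) (t0 := t) Hs Hr _ Hp Hk.
    by rewrite -Ex Hnet => /(_ erefl) [|[]].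
  move=> /(iP I Hs1) [W0 [HW0 HP]]; exists W0; split => // s Hw Hs.
  have [H1 H2] := HP s Hw Hs; split; first exact: leq_trans H1 (Fclk s).
  by move=> T' k; rewrite Fprop; apply: H2.
Qed.

Lemma Inv_drop (st : gst) r x m rest :
  Inv st -> net st x (inl r) = m :: rest ->
  (forall s T k, x = inl s -> m <> MProposed T k) ->
  Inv (GState (upd (srv st) r (srv st r)) (cli st) (setch (net st) x (inl r) rest) (signed st)).
Proof.
move=> I Hnet Hm; apply: (Inv_quiet I) => /=.
- by move=> s; rewrite /upd; case: eqP => // ->.
- by move=> s y m0 _; apply: In_setch Hnet.
- move=> s s1 _ _; rewrite /setch; case: ifP => [/andP [/eqP Ex /eqP Es1]|_]; last by left.
  right; exists m; split; first by case: Es1 => ->; rewrite Ex.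
  by move=> T k; apply: (Hm s); rewrite -Ex.
- by [].
- by move=> T0 t0 ->; left.
- by move=> a b T0 t0 /(In_setch Hnet) /(iS I).
- exact: (iC I).
- exact: (iA I).
Qed.

Lemma Inv_propose (st : gst) r X T rest :
  Inv st -> r \notin Byz -> net st (inr X) (inl r) = MPropose T :: rest ->
  let ss := srv st r in let k := clock ss in
  let c := setch (net st) (inr X) (inl r) rest in
  Inv (GState (upd (srv st) r (SState k (upd (proposed ss) r (rcons (proposed ss r) (T, k)))
                 (confirmed ss) (pending ss) (cwit ss) (fwd ss))) (cli st)
        (push (bcast c (inl r) (MProposed T k)) (inl r) (inr X) (MProposeAck T k)) (signed st)).
Proof.
move=> I Hr Hnet ss k c.
set st' := GState _ _ _ _.
have Fclk : forall s, clock (srv st' s) = clock (srv st s).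
  by move=> s; rewrite /st' /= /upd; case: eqP => // ->.
have Fconf : forall s, confirmed (srv st' s) = confirmed (srv st s).
  by move=> s; rewrite /st' /= /upd; case: eqP => // ->.
have Fpend : forall s, pending (srv st' s) = pending (srv st s).
  by move=> s; rewrite /st' /= /upd; case: eqP => // ->.
have Fcwit : forall s, cwit (srv st' s) = cwit (srv st s).
  by move=> s; rewrite /st' /= /upd; case: eqP => // ->.
have Fprop : forall s s0 p, (p \in proposed (srv st' s) s0) =
     (p \in proposed (srv st s) s0) || [&& s == r, s0 == r & p == (T,k)].
  move=> s s0 p; rewrite /st' /= /upd; case: (s =P r) => [->|_] /=; last by rewrite orbF.
  case: (s0 =P r) => [->|_] /=; last by rewrite orbF.
  by rewrite -cats1 mem_cat inE.
have Fgrow : forall s s0 p, p \in proposed (srv st s) s0 -> p \in proposed (srv st' s) s0.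
  by move=> s s0 p H; rewrite Fprop H.
have Fown : forall s p, p \in proposed (srv st' s) s -> p \in proposed (srv st s) s \/ (s = r /\ p = (T,k)).
  move=> s p; rewrite Fprop => /orP [H|/and3P [/eqP -> _ /eqP ->]]; by [left|right].
have Fnet_in : forall a b m', List.In m' (net st' a b) -> List.In m' (net st a b) \/
     (a = inl r /\ (m' = MProposed T k \/ m' = MProposeAck T k)).
  move=> a b m'; rewrite /st' /=.
  case/In_push => [|[-> [-> _]]]; last by right; split => //; right.
  case/In_bcast => [/(In_setch Hnet)|[-> ->]]; first by left.
  by right; split => //; left.
have Fnet_ss : forall s s1, net st' (inl s) (inl s1) =
    if s == r then rcons (net st (inl s) (inl s1)) (MProposed T k) else net st (inl s) (inl s1).
  move=> s s1; rewrite /st' /= /push /bcast /c /setch !inl_eq /= !andbF /=.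
  by rewrite andbT.
split.
- by move=> a b T0 t0 /Fnet_in [/(iS I)|[_ [|]]].
- by move=> s T0 t0 Hs; rewrite Fconf; apply: (iCF I).
- exact: (iC I).
- by move=> s T0 k0 Hs /(iA I Hs) /Fgrow.
- move=> s y T0 k0 Hs /Fnet_in [/(iA2 I Hs) /Fgrow //|[[->] [//|[-> ->]]]].
  by rewrite Fprop !eqxx orbT.
- move=> s y T0 k0 Hs /Fnet_in [/(iA3 I Hs) /Fgrow //|[[->] [[-> ->]|//]]].
  by rewrite Fprop !eqxx orbT.
- move=> s s1 T0 k0 Hs Hs1.
  case: (s =P s1) => [<- ->|/eqP Hne]; first by left.
  rewrite Fnet_ss; case/Fown => [/(iL I Hs Hs1) [/Fgrow ->|H]|[-> [-> ->]]]; first by left.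
    by right; case: eqP => _ //; apply/In_rcons; left.
  by right; rewrite eqxx; apply/In_rcons; right.
- move=> s s1 c1 c2 T0 t0 T' k0 Hs Hs1.
  case: (s =P s1) => [<- _ ->|/eqP Hne]; first by left.
  rewrite Fnet_ss => Hc Hp Hk.
  have [c2' Hc'] : exists c2', net st (inl s) (inl s1) = c1 ++ MConfirm T0 t0 :: c2'.
    move: Hc; case: eqP => _; last by exists c2.
    by move=> Hc0; case: (rcons_decomp Hc0) => [//|[_ E]].
  case/Fown: Hp => [Hp|[Esr [E1 E2]]].
    by case: (iK I Hs Hs1 Hc' Hp Hk) => [/Fgrow ->|]; [left|right].
  subst s; move: Hk; rewrite E2 ltnNge (iK2 I (y := inl s1) (T0 := T0) Hs) //.
  by rewrite Hc' List.in_app_iff; right; left.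
- by move=> s y T0 t0 Hs; rewrite Fclk => /Fnet_in [/(iK2 I Hs)|[_ [|]]].
- by move=> s1 s T0 Hs1; rewrite Fcwit; apply: (iW I).
- move=> s s1 T0 t0 T' k0 Hs Hs1; rewrite Fcwit => Hw Hsg /Fown [Hp|[Esr [E1 E2]]] Hk.
    exact/Fgrow/(iJ I Hs Hs1 Hw Hsg Hp Hk).
  subst s; move: Hk; rewrite E2 ltnNge (iM I Hs Hs1 Hw Hsg) //.
- by move=> s s1 T0 t0 Hs Hs1; rewrite Fcwit Fclk; apply: (iM I).
- move=> s1 t Hs1; rewrite Fpend => /(iP I Hs1) [W [HW HP]]; exists W; split => // s Hw Hs.
  have [H1 H2] := HP s Hw Hs; rewrite Fclk; split => // T' k0 /Fown [Hp|[Esr [E1 E2]]] Hk.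
    exact: (H2 T' k0 Hp Hk).
  subst s; move: Hk; rewrite E2 ltnNge H1 //.
Qed.

Lemma Inv_proposed (st : gst) r s' T k rest :
  Inv st -> r \notin Byz -> net st (inl s') (inl r) = MProposed T k :: rest ->
  let ss := srv st r in
  Inv (GState (upd (srv st) r (SState (clock ss) (upd (proposed ss) s' (rcons (proposed ss s') (T, k)))
                 (confirmed ss) (pending ss) (cwit ss) (fwd ss))) (cli st)
        (setch (net st) (inl s') (inl r) rest) (signed st)).
Proof.
move=> I Hr Hnet ss.
set st' := GState _ _ _ _.
have Fclk : forall s, clock (srv st' s) = clock (srv st s).
  by move=> s; rewrite /st' /= /upd; case: eqP => // ->.
have Fconf : forall s, confirmed (srv st' s) = confirmed (srv st s).
  by move=> s; rewrite /st' /= /upd; case: eqP => // ->.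
have Fpend : forall s, pending (srv st' s) = pending (srv st s).
  by move=> s; rewrite /st' /= /upd; case: eqP => // ->.
have Fcwit : forall s, cwit (srv st' s) = cwit (srv st s).
  by move=> s; rewrite /st' /= /upd; case: eqP => // ->.
have Fprop : forall s s0 p, (p \in proposed (srv st' s) s0) =
     (p \in proposed (srv st s) s0) || [&& s == r, s0 == s' & p == (T,k)].
  move=> s s0 p; rewrite /st' /= /upd; case: (s =P r) => [->|_] /=; last by rewrite orbF.
  case: (s0 =P s') => [->|_] /=; last by rewrite orbF.
  by rewrite -cats1 mem_cat inE.
have Fgrow : forall s s0 p, p \in proposed (srv st s) s0 -> p \in proposed (srv st' s) s0.
  by move=> s s0 p H; rewrite Fprop H.
have Fown : forall s p, s \notin Byz -> p \in proposed (srv st' s) s -> p \in proposed (srv st s) s.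
  move=> s p Hs; rewrite Fprop => /orP [//|/and3P [/eqP E1 /eqP E2 /eqP ->]].
  subst s'; apply: (iA3 I (y := inl r) Hs); by rewrite Hnet; left.
have Fnet_ss : forall s s1, net st' (inl s) (inl s1) =
    if (s == s') && (s1 == r) then rest else net st (inl s) (inl s1).
  by move=> s s1; rewrite /st' /= /setch !inl_eq.
split.
- by move=> a b T0 t0 /(In_setch Hnet) /(iS I).
- by move=> s T0 t0 Hs; rewrite Fconf; apply: (iCF I).
- exact: (iC I).
- by move=> s T0 k0 Hs /(iA I Hs) /Fgrow.
- by move=> s y T0 k0 Hs /(In_setch Hnet) /(iA2 I Hs) /Fgrow.
- by move=> s y T0 k0 Hs /(In_setch Hnet) /(iA3 I Hs) /Fgrow.
- move=> s s1 T0 k0 Hs Hs1 /(Fown _ _ Hs) /(iL I Hs Hs1) [/Fgrow ->|]; first by left.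
  rewrite Fnet_ss; case: ifP => [/andP [/eqP E1 /eqP E2]|_]; last by right.
  subst s' s1; rewrite Hnet => -[[<- <-]|H]; last by right.
  by left; rewrite Fprop !eqxx orbT.
- move=> s s1 c1 c2 T0 t0 T' k0 Hs Hs1; rewrite Fnet_ss => Hc /(Fown _ _ Hs) Hp Hk.
  move: Hc; case: ifP => [/andP [/eqP E1 /eqP E2]|_] Hc; last first.
    by case: (iK I Hs Hs1 Hc Hp Hk) => [/Fgrow ->|]; [left|right].
  subst s' s1.
  have := iK I (c1 := MProposed T k :: c1) (c2 := c2) (T0 := T0) (t0 := t0) Hs Hs1 _ Hp Hk.
  rewrite Hnet Hc => /(_ erefl) [/Fgrow ->|[[<- <-]|H]]; first by left.
    by left; rewrite Fprop !eqxx orbT.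
  by right.
- by move=> s y T0 t0 Hs; rewrite Fclk => /(In_setch Hnet) /(iK2 I Hs).
- by move=> s1 s T0 Hs1; rewrite Fcwit; apply: (iW I).
- move=> s s1 T0 t0 T' k0 Hs Hs1; rewrite Fcwit => Hw Hsg /(Fown _ _ Hs) Hp Hk.
  exact/Fgrow/(iJ I Hs Hs1 Hw Hsg Hp Hk).
- by move=> s s1 T0 t0 Hs Hs1; rewrite Fcwit Fclk; apply: (iM I).
- move=> s1 t Hs1; rewrite Fpend => /(iP I Hs1) [W [HW HP]]; exists W; split => // s Hw Hs.
  have [H1 H2] := HP s Hw Hs; rewrite Fclk; split => // T' k0 /(Fown _ _ Hs) Hp Hk.
  exact: (H2 T' k0 Hp Hk).
Qed.

Lemma Inv_step (st st' : gst) : Inv st -> step Byz st st' -> Inv st'.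
Proof.
move=> I H; case: H I.
- by move=> st0 T Hid I; apply: Inv_client_propose.
- by move=> st0 T s m rest Hnet cs cs' I; apply: Inv_client_recv.
- by move=> st0 T Hw Hn th I; apply: Inv_client_confirm.
- move=> st0 s x m rest Hs Hnet r I; rewrite /r {r}.
  case: m Hnet => [T|T k|T k|T t] Hnet; case: x Hnet => [s'|X] Hnet.
  + by apply: (Inv_drop I Hnet).
  + exact: (Inv_propose I Hs Hnet).
  + exact: (Inv_proposed I Hs Hnet).
  + by apply: (Inv_drop I Hnet).
  + by apply: (Inv_drop I Hnet).
  + by apply: (Inv_drop I Hnet).
  + exact: (Inv_confirm I Hs Hnet).
  + exact: (Inv_confirm I Hs Hnet).
- by move=> st0 s y m HB Hm I; apply: Inv_byz.
Qed.

Lemma Inv_reach (st : gst) : reachable Byz st -> Inv st.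
Proof.
elim => [|st0 st1 _ IH Hs]; first exact: Inv_init.
exact: Inv_step Hs.
Qed.

End Inv.

Theorem lemma4 (f : nat) (Tx : eqType) (Byz : {set 'I_(nsrv f)})
  (HByz : #|Byz| <= f) (st : gstate f Tx) :
  reachable Byz st ->
  forall (s1 s2 : 'I_(nsrv f)) (t t' : nat) (T : Tx),
    s1 \notin Byz -> s2 \notin Byz ->
    pending (srv st s1) t != [::] ->
    t' < t ->
    T \in confirmed (srv st s2) t' ->
    T \in pending (srv st s1) t.
Proof.
move=> Hr s1 s2 t t' T Hs1 Hs2 Hp Ht' HT.
have I := Inv_reach Hr.
have Hsg := iCF I Hs2 HT.
have [_ Eth Hn] := iC I Hsg.
have [W [HW HP]] := iP I Hs1 Hp.
have [s [k [HsW HsB Hac Hk]]] := exists_good HByz Hn HW.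
have [_ H2] := HP s HsW HsB.
apply: (H2 T k (iA I HsB Hac)).
by rewrite -Eth in Hk; apply: ltn_trans Hk Ht'.
Qed.
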